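(* In the setting of the context, suppose the algorithm described there terminates after $N$ steps, i.e. $CB^{(N)}=0$. Then the returned matrix $B$ (consisting of the non-zero columns of $B^{(N)}$) has full column rank, and $\operatorname{image}B=\operatorname{nullspace}C$.
   Context: Multi-patch setting: $\Omega\subset\mathbb{R}^2$ is the union of closures of $K$ pairwise disjoint patches $\Omega_k=G_k((0,1)^2)$; on each patch there is a local basis $\Phi^{(k)}=(\phi_i^{(k)})_{i=1}^{n^{(k)}}$ obtained by mapping tensor-product B-splines (degree $p$, open knot vectors) via $G_k$. Any two patches sharing an edge $\Gamma_{k,\ell}=\partial\Omega_k\cap\partial\Omega_\ell$ (of positive length) have nested trace spaces; the closures of two patches intersect in the empty set, a vertex of at least one of them, or an edge of at least one of them; and any two patches meeting at a T-junction (a corner of a patch lying in the interior of an edge of another patch) share an edge. Let $n^{(pw)}=\sum_kn^{(k)}$ and index the concatenated coefficient vector $\underline u_h=(\underline u_h^{(1)},\ldots,\underline u_h^{(K)})\in\mathbb{R}^{n^{(pw)}}$. Constraint matrix $C$: for every pair of patches $\Omega_k,\Omega_\ell$ sharing an edge $\Gamma=\Gamma_{k,\ell}$ with $V_h^{(k)}|_\Gamma\subseteq V_h^{(\ell)}|_\Gamma$, and every $i$ with $\phi_i^{(k)}|_\Gamma\not\equiv0$, write $\phi_i^{(k)}=\sum_jE^{(k,\ell)}_{i,j}\phi_j^{(\ell)}$ on $\Gamma$ with nonnegative coefficients (from knot insertion, with row sums $\sum_jE^{(k,\ell)}_{i,j}=1$); then $C$ has a row representing the constraint $u_i^{(k)}-\sum_jE^{(k,\ell)}_{i,j}u_j^{(\ell)}=0$.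 (Constraints may be redundant.) For a matrix $D$ and row $m$ define $\mathcal F_m(D)=\{n: D_{m,n}\ne0,\ D_{m,n}D_{m,j}\le0\ \forall j\ne n\}$. Algorithm: set $B^{(0)}=I\in\mathbb{R}^{n^{(pw)}\times n^{(pw)}}$; for $\nu=1,2,\ldots$ until $CB^{(\nu)}=0$: choose $m_\nu,n_\nu$ with $n_\nu\in\mathcal F_{m_\nu}(CB^{(\nu-1)})$, set $R^{(\nu)}=I-\frac{1}{e_{m_\nu}^\top CB^{(\nu-1)}e_{n_\nu}}e_{n_\nu}e_{m_\nu}^\top CB^{(\nu-1)}$ and $B^{(\nu)}=B^{(\nu-1)}R^{(\nu)}$. Return $B$ consisting of the non-zero columns of $B^{(N)}$, where $N$ is the first index with $CB^{(N)}=0$. Here $e_j$ denotes the $j$-th unit vector. *)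

(* Defs.v *)
From mathcomp Require Import all_boot all_order all_algebra.
Set Implicit Arguments. Unset Strict Implicit. Unset Printing Implicit Defensive.
Import Order.TTheory GRing.Theory Num.Theory.
Local Open Scope ring_scope.

Section Defs.
Variable R : realFieldType.

(* Algebraic shape of a row of the constraint matrix C (dofs indexed by 'I_n,
   [patch] assigns each global dof index to its patch in 'I_K):
   row m encodes  u_a - \sum_j E_{a,j} u_j = 0  with dof a in patch k,
   all j with E_{a,j} <> 0 in one patch l <> k, E_{a,j} >= 0, \sum_j E_{a,j} = 1. *)
Definition constraint_row (K n r : nat) (patch : 'I_n -> 'I_K)
    (C : 'M[R]_(r, n)) (m : 'I_r) : Prop :=
  exists (a : 'I_n) (l : 'I_K),
    [/\ patch a != l, C m a = 1,
        (forall j, j != a -> C m j <= 0),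
        (forall j, j != a -> C m j != 0 -> patch j = l)
      & \sum_(j < n) C m j = 0].

Definition constraint_matrix (K n r : nat) (patch : 'I_n -> 'I_K)
    (C : 'M[R]_(r, n)) : Prop :=
  forall m, constraint_row patch C m.

Definition Fset (r n : nat) (D : 'M[R]_(r, n)) (m : 'I_r) (j : 'I_n) : bool :=
  (D m j != 0) && [forall j' : 'I_n, (j' != j) ==> (D m j * D m j' <= 0)].

Definition Rstep (r n : nat) (D : 'M[R]_(r, n)) (m : 'I_r) (j : 'I_n)
    : 'M[R]_n :=
  1%:M - (D m j)^-1 *: (delta_mx j m *m D).

(* B^(nu) of the algorithm, with (ms nu, ns nu) the pivot chosen at step nu+1 *)
Fixpoint Biter (r n : nat) (C : 'M[R]_(r, n)) (ms : nat -> 'I_r)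
    (ns : nat -> 'I_n) (nu : nat) : 'M[R]_n :=
  match nu with
  | 0 => 1%:M
  | nu'.+1 => let B := Biter C ms ns nu' in B *m Rstep (C *m B) (ms nu') (ns nu')
  end.

Definition nzcols (n p : nat) (M : 'M[R]_(n, p)) : {set 'I_p} :=
  [set j : 'I_p | col j M != 0].

Definition nzcol_mx (n p : nat) (M : 'M[R]_(n, p)) : 'M[R]_(n, #|nzcols M|) :=
  \matrix_(i < n, k < #|nzcols M|) M i (enum_val k).

End Defs.

(* Main.v *)
Require Import Defs.
From mathcomp Require Import all_boot all_order all_algebra.
Import Order.TTheory GRing.Theory Num.Theory.
Local Open Scope ring_scope.
Set Implicit Arguments. Unset Strict Implicit. Unset Printing Implicit Defensive.

Section Aux.
Variable R : realFieldType.

Lemma step_entry n r (B : 'M[R]_n) (D : 'M[R]_(r, n)) m j i k :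
  (B *m Rstep D m j) i k = B i k - (D m j)^-1 * B i j * D m k.
Proof.
rewrite /Rstep mulmxBr mulmx1 -scalemxAr mulmxA.
have -> : B *m delta_mx j m = col j B *m delta_mx 0 m.
  by rewrite colE -mulmxA mul_delta_mx.
by rewrite -mulmxA -rowE !mxE big_ord1 !mxE mulrA.
Qed.

Lemma colz n p (B : 'M[R]_(n, p)) k i : col k B = 0 -> B i k = 0.
Proof. by move=> h; have := congr1 (fun M : 'M_(n,1) => M i 0) h; rewrite !mxE. Qed.

Lemma colnz_D n r (C : 'M[R]_(r, n)) (B : 'M[R]_n) m k :
  col k B = 0 -> (C *m B) m k = 0.
Proof.
move=> h; rewrite mxE big1 // => i _.
have := congr1 (fun M : 'M_(n,1) => M i 0) h; rewrite !mxE => ->; exact: mulr0.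
Qed.

Definition Inv n (B : 'M[R]_n) := forall k k' : 'I_n, col k B != 0 -> col k' B != 0 ->
  B k' k = (k' == k)%:R.

Lemma step_props n r (C : 'M[R]_(r, n)) (B : 'M[R]_n) m j :
  (C *m B) m j != 0 ->
  let B' := B *m Rstep (C *m B) m j in
  [/\ col j B != 0, col j B' = 0,
      (forall k, col k B' != 0 -> col k B != 0)
    & Inv B -> Inv B'].
Proof.
move=> dnz; cbv zeta.
have cj : col j B != 0 by apply: contra dnz => /eqP h; rewrite colnz_D.
have cj' : col j (B *m Rstep (C *m B) m j) = 0.
  apply/matrixP => i x; rewrite [LHS]mxE [RHS]mxE step_entry.
  by rewrite mulrAC mulVf // mul1r subrr.
have ck : forall k, col k (B *m Rstep (C *m B) m j) != 0 -> col k B != 0.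
  move=> k; apply: contra => /eqP h; apply/eqP/matrixP => i x.
  by rewrite [LHS]mxE [RHS]mxE step_entry (colnz_D C m h) mulr0 subr0 (colz i h).
split=> // IB k k' nk nk'.
have kj : k' != j by apply: contra nk' => /eqP ->; rewrite cj'.
rewrite step_entry (IB j k') // ?ck // (negbTE kj) mulr0 mul0r subr0.
exact: IB (ck _ _) (ck _ _).
Qed.

End Aux.

Theorem mainTheorem4 (R : realFieldType) (K n r : nat) (patch : 'I_n -> 'I_K)
    (C : 'M[R]_(r, n)) (ms : nat -> 'I_r) (ns : nat -> 'I_n) (N : nat) :
  constraint_matrix patch C ->
  (* pivot choices n_nu \in F_{m_nu}(C B^(nu-1)) for nu = 1..N *)
  (forall nu, (nu < N)%N -> Fset (C *m Biter C ms ns nu) (ms nu) (ns nu)) ->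
  (* the algorithm has not stopped before step N *)
  (forall nu, (nu < N)%N -> C *m Biter C ms ns nu != 0) ->
  (* ... and stops at step N *)
  C *m Biter C ms ns N = 0 ->
  let B := nzcol_mx (Biter C ms ns N) in
  \rank B = #|nzcols (Biter C ms ns N)| /\
  (forall u : 'cV[R]_n, C *m u = 0 <-> exists x, u = B *m x).
Proof.
move=> _ hF _ hN B.
set BN := Biter C ms ns N.
have Istep : forall nu, (nu < N)%N -> Inv (Biter C ms ns nu) -> Inv (Biter C ms ns nu.+1).
  move=> nu lt IB /=.
  have dnz : (C *m Biter C ms ns nu) (ms nu) (ns nu) != 0 by case/andP: (hF nu lt).
  by case: (step_props dnz) => _ _ _; apply.
have Iall : forall nu, (nu <= N)%N -> Inv (Biter C ms ns nu).
  elim=> [|nu IH] le.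
    by move=> k k' _ _ /=; rewrite mxE.
  by apply: Istep => //; apply: IH; apply: ltnW.
have IN : Inv BN by apply: Iall.
have fix_u : forall u : 'cV[R]_n, C *m u = 0 -> forall nu, Biter C ms ns nu *m u = u.
  move=> u hu; elim=> [|nu IH] /=; first by rewrite mul1mx.
  rewrite -mulmxA /Rstep mulmxBl mul1mx -scalemxAl -mulmxA -(mulmxA C) IH hu.
  by rewrite mulmx0 scaler0 subr0 IH.
have nzc : forall k : 'I_#|nzcols BN|, col (enum_val k) BN != 0.
  move=> k; have := enum_valP k; rewrite inE; exact.
have CB0 : C *m B = 0.
  apply/matrixP => i k; rewrite !mxE.
  have := congr1 (fun M : 'M_(r, n) => M i (enum_val k)) hN; rewrite !mxE => h; rewrite -[RHS]h.
  by apply: eq_bigr => l _; rewrite /B mxE.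
split.
  pose P := \matrix_(k < #|nzcols BN|, i < n) ((i == enum_val k)%:R : R).
  have PB : P *m B = 1%:M.
    apply/matrixP => k' k; rewrite !mxE (bigD1 (enum_val k')) //= big1; last first.
      by move=> i /negbTE ni; rewrite !mxE ni mul0r.
    rewrite !mxE eqxx mul1r addr0 (IN _ _ (nzc k) (nzc k')).
    by rewrite (inj_eq enum_val_inj).
  have := mxrankM_maxr P B; rewrite PB mxrank1 => h.
  by apply/eqP; rewrite eqn_leq rank_leq_col h.
move=> u; split; last first.
  by move=> [x ->]; rewrite mulmxA CB0 mul0mx.
move=> hu; exists (\col_k u (enum_val k) 0).
apply/matrixP => i z; rewrite (ord1 z) !mxE.
have := congr1 (fun M : 'cV_n => M i 0) (fix_u u hu N); rewrite mxE => <-.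
rewrite (bigID (fun j => j \in nzcols BN)) /= [X in _ + X]big1 ?addr0; last first.
  move=> j; rewrite inE negbK => /eqP h; by rewrite (colz i h) mul0r.
rewrite big_enum_val; apply: eq_bigr => k _; by rewrite !mxE.
Qed.
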